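(* Let $S$ be a finitely generated semigroup and let $A$ and $B$ be finite generating sets for $S$. Then $\Omega\Gamma_r(S,A)$ is isomorphic, as a partially ordered set, to $\Omega\Gamma_r(S,B)$.
   Context: A digraph on a set $\Omega$ is a subset $\Gamma\subseteq\Omega\times\Omega$. A path is a finite or infinite sequence of pairwise distinct vertices $(v_0,v_1,\ldots)$ with $(v_i,v_{i+1})\in\Gamma$ for all $i$ (a single vertex is a path of length 0); a ray is an infinite path; an anti-ray is an infinite sequence of pairwise distinct vertices with $(v_{i+1},v_i)\in\Gamma$ for all $i$. For infinite $\Sigma',\Sigma\subseteq\Omega$, write $\Sigma'\preccurlyeq\Sigma$ if there are infinitely many pairwise vertex-disjoint paths each with initial vertex in $\Sigma'$ and final vertex in $\Sigma$. Restricted to rays and anti-rays of $\Gamma$ (identified with their vertex sets), $\preccurlyeq$ is a preorder; $\mathbf{r}\approx\mathbf{r}'$ iff $\mathbf{r}\preccurlyeq\mathbf{r}'$ and $\mathbf{r}'\preccurlyeq\mathbf{r}$. The ends of $\Gamma$ are the $\approx$-classes of rays and anti-rays, and $\Omega\Gamma$ is the set of ends partially ordered by the order induced by $\preccurlyeq$. The right Cayley graph $\Gamma_r(S,A)$ is the digraph on $S$ with edges $(x,xa)$, $x\in S$, $a\in A$. *)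

(* Defs.v *)
From Stdlib Require Import List.
Import ListNotations.
Set Implicit Arguments.

Definition digraph (Omega : Type) := Omega -> Omega -> Prop.

Fixpoint chain {Omega : Type} (G : digraph Omega) (l : list Omega) : Prop :=
  match l with
  | x :: ((y :: _) as t) => G x y /\ chain G t
  | _ => True
  end.

Definition fin_path {Omega : Type} (G : digraph Omega) (p : list Omega) : Prop :=
  p <> [] /\ NoDup p /\ chain G p.

Definition initial {Omega : Type} (p : list Omega) (x : Omega) : Prop :=
  exists t, p = x :: t.
Definition final {Omega : Type} (p : list Omega) (x : Omega) : Prop :=
  exists t, p = t ++ [x].

Definition ray {Omega : Type} (G : digraph Omega) (r : nat -> Omega) : Prop :=
  (forall i j, r i = r j -> i = j) /\ (forall i, G (r i) (r (S i))).

Definition antiray {Omega : Type} (G : digraph Omega) (r : nat -> Omega) : Prop :=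
  (forall i j, r i = r j -> i = j) /\ (forall i, G (r (S i)) (r i)).

Definition infinite_set {Omega : Type} (X : Omega -> Prop) : Prop :=
  forall l : list Omega, exists x, X x /\ ~ In x l.

Definition reach_pre {Omega : Type} (G : digraph Omega) (Sigma' Sigma : Omega -> Prop) : Prop :=
  exists P : nat -> list Omega,
    (forall n, fin_path G (P n)
       /\ (exists x, initial (P n) x /\ Sigma' x)
       /\ (exists y, final (P n) y /\ Sigma y))
    /\ (forall n m, n <> m -> forall v, In v (P n) -> ~ In v (P m)).

Definition RA {Omega : Type} (G : digraph Omega) : Type :=
  { r : nat -> Omega | ray G r \/ antiray G r }.

Definition vset {Omega : Type} {G : digraph Omega} (r : RA G) : Omega -> Prop :=
  fun x => exists i, proj1_sig r i = x.

Definition ra_le {Omega : Type} {G : digraph Omega} (r s : RA G) : Prop :=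
  reach_pre G (vset r) (vset s).

Definition ra_equiv {Omega : Type} {G : digraph Omega} (r s : RA G) : Prop :=
  ra_le r s /\ ra_le s r.

Definition is_end {Omega : Type} {G : digraph Omega} (E : RA G -> Prop) : Prop :=
  exists r : RA G, forall s, E s <-> ra_equiv r s.

Definition End_ {Omega : Type} (G : digraph Omega) : Type :=
  { E : RA G -> Prop | is_end E }.

Definition end_le {Omega : Type} {G : digraph Omega} (E F : End_ G) : Prop :=
  exists r s, proj1_sig E r /\ proj1_sig F s /\ ra_le r s.

Definition ends_iso {O1 O2 : Type} (G1 : digraph O1) (G2 : digraph O2) : Prop :=
  exists (f : End_ G1 -> End_ G2) (g : End_ G2 -> End_ G1),
    (forall x, g (f x) = x) /\ (forall y, f (g y) = y) /\
    (forall x y, end_le x y <-> end_le (f x) (f y)).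

Definition associative {S : Type} (mul : S -> S -> S) : Prop :=
  forall x y z, mul x (mul y z) = mul (mul x y) z.

Definition generates {S : Type} (mul : S -> S -> S) (A : list S) : Prop :=
  forall s, exists a l, In a A /\ Forall (fun x => In x A) l /\ fold_left mul l a = s.

Definition cayley_r {S : Type} (mul : S -> S -> S) (A : list S) : digraph S :=
  fun x y => exists a, In a A /\ y = mul x a.

(* Main.v *)
Require Import Defs.
From Stdlib Require Import List Arith Lia Classical ClassicalEpsilon FunctionalExtensionality PropExtensionality ProofIrrelevance.
Import ListNotations.

Definition op {O : Type} (G : digraph O) : digraph O := fun x y => G y x.

Definition NS {O : Type} (G : digraph O) (X Y : O -> Prop) : Prop :=
  forall F : list O, exists l, chain G l /\ (exists x, initial l x /\ X x) /\
    (exists y, final l y /\ Y y) /\ (forall v, In v l -> ~ In v F).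

Lemma chain_app {O} (G : digraph O) : forall l1 z l2,
  chain G (l1 ++ z :: l2) <-> chain G (l1 ++ [z]) /\ chain G (z :: l2).
Proof.
  induction l1 as [|a l1 IH]; intros z l2; simpl.
  - tauto.
  - destruct l1 as [|b l1']; simpl.
    + tauto.
    + specialize (IH z l2). simpl in IH. tauto.
Qed.

Lemma chain_rev {O} (G : digraph O) : forall l, chain G l -> chain (op G) (rev l).
Proof.
  induction l as [|x l IH]; intros H; simpl; [exact I|].
  destruct l as [|y l']; simpl; [exact I|].
  destruct H as [Hxy H]. specialize (IH H). simpl in IH.
  rewrite <- app_assoc. simpl. apply chain_app. split; [exact IH|].
  simpl. split; [exact Hxy| exact I].
Qed.

Lemma chain_nth {O} (G : digraph O) : forall l k d, chain G l -> S k < length l ->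
  G (nth k l d) (nth (S k) l d).
Proof.
  induction l as [|x l IH]; intros k d H Hk; simpl in *; [lia|].
  destruct l as [|y l']; simpl in *; [lia|].
  destruct H as [Hxy H]. destruct k; [exact Hxy|].
  apply (IH k d H). simpl. lia.
Qed.

Lemma chain_seq {O} (G : digraph O) (f : nat -> O) : (forall k, G (f k) (f (S k))) ->
  forall n a, chain G (map f (seq a n)).
Proof.
  intros Hf. induction n as [|n IH]; intros a; simpl; [exact I|].
  destruct n as [|n']; simpl; [exact I|].
  split; [apply Hf|]. specialize (IH (S a)). simpl in IH. exact IH.
Qed.

Lemma final_app {O} : forall (m k : list O) y, k <> [] -> (final (m ++ k) y <-> final k y).
Proof.
  intros m k y Hk. unfold final. split.
  - intros [t Ht]. destruct (exists_last Hk) as [k' [u Hu]]. subst k.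
    rewrite app_assoc in Ht. apply app_inj_tail in Ht. destruct Ht as [_ ->]. eauto.
  - intros [t ->]. exists (m ++ t). now rewrite app_assoc.
Qed.

Lemma initial_app {O} : forall (m k : list O) x, m <> [] -> initial m x -> initial (m ++ k) x.
Proof. intros m k x _ [t ->]. exists (t ++ k). reflexivity. Qed.

Lemma walk_cat {O} (G : digraph O) : forall l1 l2 y, chain G l1 -> final l1 y -> chain G l2 -> initial l2 y ->
  exists l, chain G l /\ (forall x, initial l1 x -> initial l x) /\ (forall z, final l2 z -> final l z)
   /\ (forall v, In v l -> In v l1 \/ In v l2).
Proof.
  intros l1 l2 y H1 [t1 E1] H2 [t2 E2]. subst l1 l2.
  exists (t1 ++ y :: t2). split; [apply chain_app; auto|]. split; [|split].
  - intros x [t Ht]. exists (t ++ t2). destruct t1; simpl in *; injection Ht; intros; subst.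
    + reflexivity.
    + rewrite <- app_assoc in *. simpl. subst. reflexivity.
  - intros z Hz. apply final_app; [discriminate|exact Hz].
  - intros v Hv. apply in_app_iff in Hv. destruct Hv as [Hv|Hv]; [left; apply in_app_iff; auto|right; exact Hv].
Qed.

Lemma not_NoDup_split {O} : forall l : list O, ~ NoDup l ->
  exists l1 z l2 l3, l = l1 ++ z :: l2 ++ z :: l3.
Proof.
  induction l as [|a l IH]; intros H.
  - exfalso. apply H. constructor.
  - destruct (classic (In a l)) as [Ha|Ha].
    + destruct (in_split _ _ Ha) as [l2 [l3 ->]]. exists [], a, l2, l3. reflexivity.
    + destruct (classic (NoDup l)) as [Hl|Hl].
      * exfalso. apply H. constructor; auto.
      * destruct (IH Hl) as [l1 [z [l2 [l3 ->]]]]. exists (a :: l1), z, l2, l3. reflexivity.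
Qed.

Lemma walk_to_path {O} (G : digraph O) : forall n l, length l <= n -> chain G l -> forall x y,
  initial l x -> final l y -> exists p, fin_path G p /\ initial p x /\ final p y /\ incl p l.
Proof.
  induction n as [|n IH]; intros l Hlen Hc x y Hx Hy.
  - destruct Hx as [t ->]. simpl in Hlen. lia.
  - destruct (classic (NoDup l)) as [Hnd|Hnd].
    + exists l. split; [|split; [exact Hx|split; [exact Hy| intros a Ha; exact Ha]]].
      split; [destruct Hx as [t ->]; discriminate|split; assumption].
    + destruct (not_NoDup_split l Hnd) as [l1 [z [l2 [l3 E]]]]. subst l.
      destruct (IH (l1 ++ z :: l3)) with (x := x) (y := y) as [p [Hp1 [Hp2 [Hp3 Hp4]]]].
      * rewrite !length_app in Hlen. simpl in Hlen. rewrite length_app in Hlen. rewrite length_app. simpl. simpl in Hlen. lia.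
      * apply chain_app in Hc. destruct Hc as [Hc1 Hc2].
        change (z :: l2 ++ z :: l3) with ((z :: l2) ++ z :: l3) in Hc2.
        apply chain_app in Hc2. apply chain_app. tauto.
      * destruct l1 as [|a l1]; simpl in *.
        -- destruct Hx as [t Ht]. injection Ht; intros; subst. exists l3. reflexivity.
        -- destruct Hx as [t Ht]. injection Ht; intros; subst. eexists; reflexivity.
      * apply final_app; [discriminate|]. apply final_app in Hy; [|discriminate].
        change (z :: l2 ++ z :: l3) with ((z :: l2) ++ z :: l3) in Hy.
        apply final_app in Hy; [exact Hy|discriminate].
      * exists p. split; [exact Hp1|split; [exact Hp2|split; [exact Hp3|]]].
        intros a Ha. apply Hp4 in Ha. apply in_app_iff in Ha. apply in_app_iff. simpl in *.
        destruct Ha as [Ha|[Ha|Ha]]; auto. right. right. apply in_app_iff. simpl. auto.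
Qed.

Lemma avoid_exists {O} (P : nat -> list O) :
  (forall n m, n <> m -> forall v, In v (P n) -> ~ In v (P m)) ->
  forall F N, exists n, N <= n /\ forall v, In v (P n) -> ~ In v F.
Proof.
  intros Hd. induction F as [|v0 F IH]; intros N.
  - exists N. split; auto.
  - destruct (IH N) as [n1 [Hn1 Ha1]].
    destruct (classic (In v0 (P n1))) as [Hv|Hv].
    + destruct (IH (S n1)) as [n2 [Hn2 Ha2]]. exists n2. split; [lia|].
      intros v Hv2 [E|Hin].
      * subst v. apply (Hd n1 n2 ltac:(lia) v0 Hv Hv2).
      * exact (Ha2 v Hv2 Hin).
    + exists n1. split; [exact Hn1|]. intros v Hv1 [E|Hin].
      * subst. contradiction.
      * exact (Ha1 v Hv1 Hin).
Qed.

Lemma reach_NS {O} (G : digraph O) X Y : reach_pre G X Y -> NS G X Y.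
Proof.
  intros [P [HP Hd]] F. destruct (avoid_exists P Hd F 0) as [n [_ Hn]].
  destruct (HP n) as [[_ [_ Hc]] [Hx Hy]]. exists (P n). auto.
Qed.

Lemma NS_reach {O} (G : digraph O) X Y : NS G X Y -> reach_pre G X Y.
Proof.
  intros H.
  assert (Hn : forall F : list O, exists p, (fin_path G p /\ (exists x, initial p x /\ X x) /\
     (exists y, final p y /\ Y y)) /\ (forall v, In v p -> ~ In v F)).
  { intros F. destruct (H F) as [l [Hc [[x [Hx HX]] [[y [Hy HY]] Ha]]]].
    destruct (walk_to_path G (length l) l (le_n _) Hc x y Hx Hy) as [p [Hp1 [Hp2 [Hp3 Hp4]]]].
    exists p. split; [split; [exact Hp1|split; eauto]|]. intros v Hv. apply Ha, Hp4, Hv. }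
  set (next := fun F => proj1_sig (constructive_indefinite_description _ (Hn F))).
  assert (Hnext : forall F, (fin_path G (next F) /\ (exists x, initial (next F) x /\ X x) /\
     (exists y, final (next F) y /\ Y y)) /\ (forall v, In v (next F) -> ~ In v F)).
  { intros F. exact (proj2_sig (constructive_indefinite_description _ (Hn F))). }
  clearbody next.
  set (acc := fix acc n := match n with 0 => [] | S n => acc n ++ next (acc n) end).
  assert (Hacc : forall n m, n <= m -> incl (acc n) (acc m)).
  { intros n m Hnm. induction Hnm; [intros a Ha; exact Ha|].
    intros a Ha. simpl. apply in_app_iff. left. auto. }
  exists (fun n => next (acc n)). split; [intros n; apply Hnext|].
  assert (Hlt : forall n m, n < m -> forall v, In v (next (acc n)) -> ~ In v (next (acc m))).
  { intros n m Hnm v Hv Hv2. apply (proj2 (Hnext (acc m)) v Hv2).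
    apply (Hacc (S n) m Hnm). simpl. apply in_app_iff. right. exact Hv. }
  intros n m Hnm v Hv Hv2. destruct (Nat.lt_gt_cases n m) as [[Hl|Hl] _]; [exact Hnm| |].
  - exact (Hlt n m Hl v Hv Hv2).
  - exact (Hlt m n Hl v Hv2 Hv).
Qed.

Lemma NS_op {O} (G : digraph O) X Y : NS (op G) X Y -> NS G Y X.
Proof.
  intros H F. destruct (H F) as [l [Hc [[x [[t Hx] HX]] [[y [[t' Hy] HY]] Ha]]]].
  exists (rev l). split; [|split; [|split]].
  - apply (chain_rev (op G)) in Hc. exact Hc.
  - exists y. split; [|exact HY]. rewrite Hy, rev_app_distr. simpl. eexists; reflexivity.
  - exists x. split; [|exact HX]. rewrite Hx. simpl. eexists; reflexivity.
  - intros v Hv. apply Ha. apply in_rev. exact Hv.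
Qed.

Lemma inj_bound {O} (r : nat -> O) : (forall i j, r i = r j -> i = j) ->
  forall l : list O, exists N, forall j, In (r j) l -> j < N.
Proof.
  intros Hr. induction l as [|a l [N HN]].
  - exists 0. intros j [].
  - destruct (classic (exists j, r j = a)) as [[j0 Hj0]|Hno].
    + exists (max N (S j0)). intros j [E|Hj].
      * rewrite <- Hj0 in E. apply Hr in E. lia.
      * specialize (HN j Hj). lia.
    + exists N. intros j [E|Hj]; [exfalso; eauto|auto].
Qed.

Lemma seg_walk {O} (G : digraph O) (f : nat -> O) : (forall k, G (f k) (f (S k))) ->
  forall a b, a <= b -> chain G (map f (seq a (S (b - a)))) /\ initial (map f (seq a (S (b - a)))) (f a)
    /\ final (map f (seq a (S (b - a)))) (f b)
    /\ (forall v, In v (map f (seq a (S (b - a)))) -> exists m, a <= m /\ v = f m).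
Proof.
  intros Hf a b Hab. split; [apply chain_seq; exact Hf|split; [|split]].
  - simpl. eexists; reflexivity.
  - rewrite seq_S, map_app. simpl. replace (a + (b - a)) with b by lia. eexists; reflexivity.
  - intros v Hv. apply in_map_iff in Hv. destruct Hv as [m [<- Hm]]. apply in_seq in Hm.
    exists m. split; [lia|reflexivity].
Qed.

Lemma trans_ray {O} (G : digraph O) (m : nat -> O) X Z : ray G m ->
  NS G X (fun x => exists i, m i = x) -> NS G (fun x => exists i, m i = x) Z -> NS G X Z.
Proof.
  intros [Hinj He] H1 H2 F.
  destruct (inj_bound m Hinj F) as [N HN].
  destruct (H1 (F ++ map m (seq 0 N))) as [l1 [Hc1 [Hx1 [[y [Hy1 [i Hi]]] Ha1]]]].
  assert (HiN : N <= i).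
  { destruct (le_lt_dec N i) as [h|h]; [exact h|]. exfalso. apply (Ha1 y).
    - destruct Hy1 as [t ->]. apply in_app_iff. right. left. reflexivity.
    - apply in_app_iff. right. apply in_map_iff. exists i. split; [exact Hi|]. apply in_seq. lia. }
  destruct (H2 (F ++ map m (seq 0 (S i)))) as [l2 [Hc2 [[x2 [Hx2 [j Hj]]] [Hy2 Ha2]]]].
  assert (Hij : i <= j).
  { destruct (le_lt_dec i j) as [h|h]; [exact h|]. exfalso. apply (Ha2 x2).
    - destruct Hx2 as [t ->]. left. reflexivity.
    - apply in_app_iff. right. apply in_map_iff. exists j. split; [exact Hj|]. apply in_seq. lia. }
  destruct (seg_walk G m He i j Hij) as [Hc3 [Hx3 [Hy3 Hv3]]].
  set (l3 := map m (seq i (S (j - i)))) in *.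
  rewrite Hi in Hx3. rewrite Hj in Hy3.
  destruct (walk_cat G l1 l3 y Hc1 Hy1 Hc3 Hx3) as [l4 [Hc4 [Hx4 [Hy4 Hv4]]]].
  destruct (walk_cat G l4 l2 x2 Hc4 (Hy4 _ Hy3) Hc2 Hx2) as [l5 [Hc5 [Hx5 [Hy5 Hv5]]]].
  exists l5. split; [exact Hc5|split; [|split]].
  - destruct Hx1 as [x [Hx HX]]. exists x. split; auto.
  - destruct Hy2 as [z [Hz HZ]]. exists z. split; auto.
  - intros v Hv. apply Hv5 in Hv. destruct Hv as [Hv|Hv].
    + apply Hv4 in Hv. destruct Hv as [Hv|Hv].
      * intros HF. apply (Ha1 v Hv). apply in_app_iff. left. exact HF.
      * destruct (Hv3 v Hv) as [k [Hk ->]]. intros HF. specialize (HN k HF). lia.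
    + intros HF. apply (Ha2 v Hv). apply in_app_iff. left. exact HF.
Qed.

Lemma trans_RA {O} (G : digraph O) (m : RA G) X Z :
  NS G X (vset m) -> NS G (vset m) Z -> NS G X Z.
Proof.
  destruct m as [m [Hm|Hm]]; unfold vset; simpl; intros H1 H2.
  - exact (trans_ray G m X Z Hm H1 H2).
  - apply NS_op. apply (trans_ray (op G) m Z X).
    + exact Hm.
    + apply (NS_op (op G)). exact H2.
    + apply (NS_op (op G)). exact H1.
Qed.

Lemma last_visit (P : nat -> Prop) : forall n, (forall t, n <= t -> ~ P t) ->
  forall t0, P t0 -> exists T, t0 <= T /\ P T /\ forall t, T < t -> ~ P t.
Proof.
  induction n as [|n IH]; intros Hn t0 Ht0.
  - exfalso. apply (Hn t0); [lia|exact Ht0].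
  - destruct (classic (P n)) as [Hp|Hp].
    + destruct (le_lt_dec t0 n) as [h|h].
      * exists n. split; [exact h|split; [exact Hp|]]. intros t Ht. apply Hn. lia.
      * exfalso. apply (Hn t0); [lia|exact Ht0].
    + apply IH; [|exact Ht0]. intros t Ht. destruct (Nat.eq_dec t n) as [->|Hne]; [exact Hp|]. apply Hn. lia.
Qed.

Lemma finvis_list {O} (w : nat -> O) : (forall v, exists T, forall t, T <= t -> w t <> v) ->
  forall F : list O, exists T, forall t, T <= t -> ~ In (w t) F.
Proof.
  intros H. induction F as [|a F [T HT]].
  - exists 0. intros t _ [].
  - destruct (H a) as [T' HT']. exists (max T T'). intros t Ht [E|Hin].
    + apply (HT' t); [lia|symmetry; exact E].
    + apply (HT t); [lia|exact Hin].
Qed.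

Lemma erase {O} (K : digraph O) (w : nat -> O) (R : O -> Prop) :
  (forall t, K (w t) (w (S t))) ->
  (forall v, exists T, forall t, T <= t -> w t <> v) ->
  (forall t, exists t', t <= t' /\ R (w t')) ->
  exists s, ray K s /\ NS K (fun x => exists i, s i = x) R /\ NS K R (fun x => exists i, s i = x).
Proof.
  intros He Hf Hh.
  assert (Hnx : forall t, exists T, t <= T /\ w T = w t /\ forall t', T < t' -> w t' <> w t).
  { intros t. destruct (Hf (w t)) as [N HN].
    apply (last_visit (fun u => w u = w t) N); [|reflexivity]. intros u Hu E. exact (HN u Hu E). }
  set (nx := fun t => proj1_sig (constructive_indefinite_description _ (Hnx t))).
  assert (Hnxs : forall t, t <= nx t /\ w (nx t) = w t /\ forall t', nx t < t' -> w t' <> w t).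
  { intros t. exact (proj2_sig (constructive_indefinite_description _ (Hnx t))). }
  clearbody nx.
  set (tt := fix tt k := match k with 0 => nx 0 | S k => nx (S (tt k)) end).
  assert (Htt : forall k, exists p, tt k = nx p) by (intros [|k]; simpl; eauto).
  assert (Hinc : forall k, S (tt k) <= tt (S k)) by (intros k; simpl; apply Hnxs).
  assert (Hmono : forall j k, j < k -> tt j < tt k).
  { intros j k Hjk. induction Hjk; [apply Hinc|]. specialize (Hinc m). lia. }
  assert (Hge : forall k, k <= tt k).
  { induction k; [lia|]. specialize (Hinc k). lia. }
  assert (Hlast : forall k t', tt k < t' -> w t' <> w (tt k)).
  { intros k t' H. destruct (Htt k) as [p Hp]. rewrite Hp in *. destruct (Hnxs p) as [_ [E H2]].
    rewrite E. apply H2. exact H. }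
  exists (fun k => w (tt k)). split; [split|split].
  - intros j k E. destruct (Nat.lt_total j k) as [H|[H|H]]; [|exact H|].
    + exfalso. apply (Hlast j (tt k)); [apply Hmono; exact H|symmetry; exact E].
    + exfalso. apply (Hlast k (tt j)); [apply Hmono; exact H|exact E].
  - intros k. simpl. destruct (Hnxs (S (tt k))) as [_ [E _]]. rewrite E. apply He.
  - intros F. destruct (finvis_list w Hf F) as [T HT].
    destruct (Hh (tt T)) as [t' [Ht' HR]].
    destruct (seg_walk K w He (tt T) t' Ht') as [Hc [Hx [Hy Hv]]].
    eexists. split; [exact Hc|split; [|split]].
    + exists (w (tt T)). split; [exact Hx|]. exists T. reflexivity.
    + exists (w t'). split; [exact Hy|exact HR].
    + intros v Hin. destruct (Hv v Hin) as [m [Hm ->]]. apply HT. specialize (Hge T). lia.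
  - intros F. destruct (finvis_list w Hf F) as [T HT].
    destruct (Hh T) as [tau [Htau HR]].
    assert (Hle : tau <= tt tau) by apply Hge.
    destruct (seg_walk K w He tau (tt tau) Hle) as [Hc [Hx [Hy Hv]]].
    eexists. split; [exact Hc|split; [|split]].
    + exists (w tau). split; [exact Hx|exact HR].
    + exists (w (tt tau)). split; [exact Hy|]. exists tau. reflexivity.
    + intros v Hin. destruct (Hv v Hin) as [m [Hm ->]]. apply HT. lia.
Qed.

Lemma segs_walk {O} (K : digraph O) (r : nat -> O) (l : nat -> list O) (M : nat) :
  (forall i j, r i = r j -> i = j) ->
  (forall i, chain K (r i :: l i ++ [r (S i)])) ->
  (forall i, length (l i) <= M) ->
  (forall v, exists N, forall i, In v (l i) -> i <= N) ->
  exists w : nat -> O, (forall t, K (w t) (w (S t))) /\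
    (forall v, exists T, forall t, T <= t -> w t <> v) /\
    (forall t, exists t', t <= t' /\ exists i, r i = w t').
Proof.
  intros Hinj Hch Hlen Hfin.
  set (stp := fun p : nat * nat => if snd p <? length (l (fst p)) then (fst p, S (snd p)) else (S (fst p), 0)).
  set (st := fix st t := match t with 0 => (0,0) | S t => stp (st t) end).
  assert (HS : forall t, st (S t) = stp (st t)) by reflexivity.
  assert (Hinv : forall t, snd (st t) <= length (l (fst (st t))) /\ t <= fst (st t) * S M + snd (st t)).
  { induction t as [|t IH]; [simpl; lia|]. rewrite HS. destruct (st t) as [i p]. simpl in IH.
    unfold stp; simpl. destruct (Nat.ltb_spec p (length (l i))); simpl.
    - lia.
    - specialize (Hlen i). nia. }
  set (w := fun t => nth (snd (st t)) (r (fst (st t)) :: l (fst (st t))) (r 0)).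
  exists w. split; [|split].
  - intros t. unfold w. rewrite HS. specialize (Hinv t). destruct (st t) as [i p]. simpl in Hinv.
    unfold stp; simpl.
    pose proof (chain_nth K _ p (r 0) (Hch i)) as Hc.
    change (r i :: l i ++ [r (S i)]) with ((r i :: l i) ++ [r (S i)]) in Hc.
    rewrite length_app in Hc.
    destruct (Nat.ltb_spec p (length (l i))); simpl.
    + rewrite app_nth1 in Hc by (simpl; lia). rewrite app_nth1 in Hc by (simpl; lia).
      apply Hc. simpl. lia.
    + assert (p = length (l i)) by lia. subst p.
      rewrite app_nth1 in Hc by (simpl; lia). rewrite app_nth2 in Hc by (simpl; lia).
      replace (S (length (l i)) - length (r i :: l i)) with 0 in Hc by (simpl; lia).
      simpl in Hc. apply Hc. simpl. lia.
  - intros v. destruct (Hfin v) as [N1 HN1]. destruct (inj_bound r Hinj [v]) as [N2 HN2].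
    exists (S ((N1 + N2) * S M + M)). intros t Ht E. unfold w in E.
    specialize (Hinv t). destruct (st t) as [i p]. simpl in Hinv, E.
    assert (Hi : i <= N1 + N2).
    { destruct p as [|p].
      - specialize (HN2 i ltac:(left; symmetry; exact E)). lia.
      - assert (In v (l i)) by (rewrite <- E; apply nth_In; lia). specialize (HN1 i H). lia. }
    specialize (Hlen i). nia.
  - assert (Hrun : forall n t, length (l (fst (st t))) - snd (st t) = n -> st (t + S n) = (S (fst (st t)), 0)).
    { induction n as [|n IH]; intros t Hn.
      - rewrite Nat.add_1_r, HS. specialize (Hinv t). destruct (st t) as [i p]. simpl in *.
        unfold stp; simpl. destruct (Nat.ltb_spec p (length (l i))); [lia|reflexivity].
      - specialize (IH (S t)). rewrite HS in IH. specialize (Hinv t).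
        destruct (st t) as [i p] eqn:Eq. simpl in *. unfold stp in IH; simpl in IH.
        destruct (Nat.ltb_spec p (length (l i))); [|lia]. simpl in IH.
        replace (t + S (S n)) with (S t + S n) by lia. apply IH. lia. }
    intros t. exists (t + S (length (l (fst (st t))) - snd (st t))). split; [lia|].
    exists (S (fst (st t))). unfold w. rewrite (Hrun _ t eq_refl). reflexivity.
Qed.

Fixpoint trail {T : Type} (mul : T -> T -> T) (u : T) (w : list T) : list T :=
  match w with [] => [] | b :: w' => mul u b :: trail mul (mul u b) w' end.

Lemma trail_chain {T} (mul : T -> T -> T) B : forall w u, (forall b, In b w -> In b B) ->
  chain (cayley_r mul B) (u :: trail mul u w).
Proof.
  induction w as [|b w IH]; intros u Hw; simpl; [exact I|]. split.
  - exists b. split; [apply Hw; left; reflexivity|reflexivity].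
  - apply IH. intros c Hc. apply Hw. right. exact Hc.
Qed.

Lemma trail_final {T} (mul : T -> T -> T) : forall w u, final (u :: trail mul u w) (fold_left mul w u).
Proof.
  induction w as [|b w IH]; intros u; simpl.
  - exists []. reflexivity.
  - destruct (IH (mul u b)) as [t Ht]. exists (u :: t). rewrite Ht. reflexivity.
Qed.

Lemma trail_in {T} (mul : T -> T -> T) : forall w u v, In v (trail mul u w) ->
  exists k, k <= length w /\ fold_left mul (skipn k w) v = fold_left mul w u.
Proof.
  induction w as [|b w IH]; intros u v Hv; simpl in Hv; [contradiction|].
  destruct Hv as [<-|Hv].
  - exists 1. simpl. split; [lia|reflexivity].
  - destruct (IH _ _ Hv) as [k [Hk E]]. exists (S k). simpl. split; [lia|exact E].
Qed.

Lemma trail_split {T} (mul : T -> T -> T) : forall w u, w <> [] ->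
  trail mul u w = removelast (trail mul u w) ++ [fold_left mul w u].
Proof.
  intros w u Hw. destruct (trail_final mul w u) as [t Ht].
  destruct t as [|a t].
  - simpl in Ht. injection Ht as _ Ht. destruct w; [contradiction|discriminate].
  - simpl in Ht. injection Ht as _ Ht. rewrite Ht, removelast_last. reflexivity.
Qed.

Lemma length_removelast_le {A} : forall l : list A, length (removelast l) <= length l.
Proof. induction l as [|a [|b l] IH]; simpl in *; lia. Qed.

Lemma in_removelast' {A} : forall (l : list A) x, In x (removelast l) -> In x l.
Proof. induction l as [|a [|b l] IH]; simpl; intros x H; [contradiction|contradiction|].
  destruct H as [H|H]; [left; exact H|right; apply IH; exact H]. Qed.

Lemma length_trail {T} (mul : T -> T -> T) : forall w u, length (trail mul u w) = length w.
Proof. induction w; simpl; auto. Qed.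

Definition words {T} (mul : T -> T -> T) (A B : list T) (W : list (list T)) : Prop :=
  (forall w, In w W -> w <> [] /\ forall b, In b w -> In b B) /\
  (forall a, In a A -> exists w, In w W /\ forall u, fold_left mul w u = mul u a).

Lemma fold_assoc {T} (mul : T -> T -> T) : associative mul ->
  forall l u b, fold_left mul l (mul u b) = mul u (fold_left mul l b).
Proof.
  intros Ha. induction l as [|c l IH]; intros u b; simpl; [reflexivity|].
  rewrite <- Ha. apply IH.
Qed.

Lemma words_exist {T} (mul : T -> T -> T) (B : list T) : associative mul -> generates mul B ->
  forall A, exists W, words mul A B W.
Proof.
  intros Ha HB. induction A as [|a A [W [HW1 HW2]]].
  - exists []. split; [intros w []|intros a []].
  - destruct (HB a) as [b0 [l [Hb0 [Hl E]]]]. exists ((b0 :: l) :: W). split.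
    + intros w [<-|Hw]; [|apply HW1, Hw]. split; [discriminate|].
      intros b [<-|Hb]; [exact Hb0|]. rewrite Forall_forall in Hl. apply Hl, Hb.
    + intros a' [<-|Ha']; [|destruct (HW2 a' Ha') as [w [Hw Hw2]]; exists w; split; [right; exact Hw|exact Hw2]].
      exists (b0 :: l). split; [left; reflexivity|]. intros u. simpl. rewrite fold_assoc by exact Ha.
      rewrite E. reflexivity.
Qed.

Definition sufs {T} (W : list (list T)) : list (list T) :=
  flat_map (fun w => map (fun k => skipn k w) (seq 0 (S (length w)))) W.

Lemma sufs_in {T} (W : list (list T)) w k : In w W -> k <= length w -> In (skipn k w) (sufs W).
Proof.
  intros Hw Hk. unfold sufs. apply in_flat_map. exists w. split; [exact Hw|].
  apply in_map_iff. exists k. split; [reflexivity|]. apply in_seq. lia.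
Qed.

Lemma edge_word {T} (mul : T -> T -> T) A B W : words mul A B W -> forall x y,
  cayley_r mul A x y -> exists w, In w W /\ fold_left mul w x = y.
Proof.
  intros [_ H] x y [a [Ha ->]]. destruct (H a Ha) as [w [Hw E]]. exists w. split; auto.
Qed.

Lemma transfer {T} (mul : T -> T -> T) A B W X Y : words mul A B W ->
  NS (cayley_r mul A) X Y -> NS (cayley_r mul B) X Y.
Proof.
  intros HW H F.
  set (Fs := F ++ flat_map (fun f => map (fun s => fold_left mul s f) (sufs W)) F).
  assert (HFs1 : forall v, In v F -> In v Fs) by (intros v Hv; apply in_app_iff; auto).
  assert (HFs2 : forall f w k, In f F -> In w W -> k <= length w -> In (fold_left mul (skipn k w) f) Fs).
  { intros f w k Hf Hw Hk. apply in_app_iff. right. apply in_flat_map. exists f. split; [exact Hf|].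
    apply (in_map (fun s => fold_left mul s f)). apply sufs_in; assumption. }
  destruct (H Fs) as [l [Hc [[x [[t ->] HX]] [Hy Ha]]]].
  assert (Hconv : forall t x, chain (cayley_r mul A) (x :: t) -> (forall v, In v (x :: t) -> ~ In v Fs) ->
     exists l', chain (cayley_r mul B) l' /\ initial l' x /\ (forall y, final (x :: t) y -> final l' y)
        /\ forall v, In v l' -> ~ In v F).
  { clear - HW HFs1 HFs2. induction t as [|z t IH]; intros x Hc Ha.
    - exists [x]. split; [exact I|split; [exists []; reflexivity|split; [auto|]]].
      intros v Hv HF. apply (Ha v Hv). apply HFs1, HF.
    - destruct Hc as [Hxz Hc]. destruct (edge_word mul A B W HW x z Hxz) as [w [Hw Ew]].
      destruct (IH z Hc) as [l2 [Hc2 [Hi2 [Hf2 Ha2]]]].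
      { intros v Hv. apply Ha. right. exact Hv. }
      pose proof (trail_final mul w x) as Htf. rewrite Ew in Htf.
      destruct (walk_cat _ _ l2 z (trail_chain mul B w x (proj2 (proj1 HW w Hw))) Htf Hc2 Hi2)
        as [l3 [Hc3 [Hi3 [Hf3 Hv3]]]].
      exists l3. split; [exact Hc3|split; [apply Hi3; exists (trail mul x w); reflexivity|split]].
      + intros y Hy. apply Hf3. apply Hf2. change (x :: z :: t) with ([x] ++ z :: t) in Hy.
        apply final_app in Hy; [exact Hy|discriminate].
      + intros v Hv HF. destruct (Hv3 v Hv) as [Hv'|Hv'].
        * destruct Hv' as [<-|Hv'].
          -- apply (Ha x); [left; reflexivity|apply HFs1, HF].
          -- destruct (trail_in mul w x v Hv') as [k [Hk E]]. apply (Ha z); [right; left; reflexivity|].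
             rewrite <- Ew, <- E. apply HFs2; assumption.
        * exact (Ha2 v Hv' HF). }
  destruct (Hconv t x Hc Ha) as [l' [Hc' [Hi' [Hf' Ha']]]].
  exists l'. split; [exact Hc'|split; [exists x; split; assumption|split; [|exact Ha']]].
  destruct Hy as [y [Hy HY]]. exists y. split; [apply Hf'; exact Hy|exact HY].
Qed.

Lemma max_len {A} (W : list (list A)) : exists M, forall w, In w W -> length w <= M.
Proof.
  induction W as [|w W [M HM]]; [exists 0; intros w []|].
  exists (max (length w) M). intros w' [<-|Hw']; [lia|specialize (HM w' Hw'); lia].
Qed.

Lemma trail_bound {T} (mul : T -> T -> T) (W : list (list T)) (r : nat -> T) :
  (forall i j, r i = r j -> i = j) -> forall v, exists N, forall j w u,
    In w W -> In v (trail mul u w) -> fold_left mul w u = r j -> j < N.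
Proof.
  intros Hinj v. destruct (inj_bound r Hinj (map (fun s => fold_left mul s v) (sufs W))) as [N HN].
  exists N. intros j w u Hw Hv E. apply HN. destruct (trail_in mul w u v Hv) as [k [Hk E2]].
  apply in_map_iff. exists (skipn k w). split; [rewrite E2; exact E|apply sufs_in; assumption].
Qed.

Lemma corr {T} (mul : T -> T -> T) A B W : words mul A B W ->
  forall r : RA (cayley_r mul A), exists s : RA (cayley_r mul B),
    NS (cayley_r mul B) (vset r) (vset s) /\ NS (cayley_r mul B) (vset s) (vset r).
Proof.
  intros HW [r [[Hinj He]|[Hinj He]]]; unfold vset; simpl.
  - assert (Hw : forall i, exists w, In w W /\ fold_left mul w (r i) = r (S i)).
    { intros i. apply (edge_word mul A B W HW). apply He. }
    set (wi := fun i => proj1_sig (constructive_indefinite_description _ (Hw i))).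
    assert (Hwi : forall i, In (wi i) W /\ fold_left mul (wi i) (r i) = r (S i)).
    { intros i. exact (proj2_sig (constructive_indefinite_description _ (Hw i))). }
    clearbody wi. destruct (max_len W) as [M HM].
    destruct (segs_walk (cayley_r mul B) r (fun i => removelast (trail mul (r i) (wi i))) M Hinj)
      as [om [Hom1 [Hom2 Hom3]]].
    + intros i. destruct (Hwi i) as [H1 H2].
      replace (r i :: removelast (trail mul (r i) (wi i)) ++ [r (S i)]) with (r i :: trail mul (r i) (wi i)).
      * apply trail_chain. apply (proj1 HW _ H1).
      * rewrite <- H2. rewrite <- trail_split; [reflexivity|apply (proj1 HW _ H1)].
    + intros i. eapply Nat.le_trans; [apply length_removelast_le|]. rewrite length_trail. apply HM, Hwi.
    + intros v. destruct (trail_bound mul W r Hinj v) as [N HN]. exists N. intros i Hi.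
      apply in_removelast' in Hi. specialize (HN (S i) (wi i) (r i) (proj1 (Hwi i)) Hi (proj2 (Hwi i))). lia.
    + destruct (erase (cayley_r mul B) om (fun x => exists i, r i = x) Hom1 Hom2 Hom3) as [s [Hs [N1 N2]]].
      exists (exist _ s (or_introl Hs)). unfold vset; simpl. split; assumption.
  - assert (Hw : forall i, exists w, In w W /\ fold_left mul w (r (S i)) = r i).
    { intros i. apply (edge_word mul A B W HW). apply He. }
    set (wi := fun i => proj1_sig (constructive_indefinite_description _ (Hw i))).
    assert (Hwi : forall i, In (wi i) W /\ fold_left mul (wi i) (r (S i)) = r i).
    { intros i. exact (proj2_sig (constructive_indefinite_description _ (Hw i))). }
    clearbody wi. destruct (max_len W) as [M HM].
    destruct (segs_walk (op (cayley_r mul B)) r (fun i => rev (removelast (trail mul (r (S i)) (wi i)))) M Hinj)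
      as [om [Hom1 [Hom2 Hom3]]].
    + intros i. destruct (Hwi i) as [H1 H2].
      pose proof (trail_chain mul B (wi i) (r (S i)) (proj2 (proj1 HW _ H1))) as Hc.
      rewrite trail_split in Hc by apply (proj1 HW _ H1). rewrite H2 in Hc.
      apply chain_rev in Hc. simpl in Hc. rewrite rev_app_distr in Hc. simpl in Hc. exact Hc.
    + intros i. rewrite length_rev. eapply Nat.le_trans; [apply length_removelast_le|]. rewrite length_trail. apply HM, Hwi.
    + intros v. destruct (trail_bound mul W r Hinj v) as [N HN]. exists N. intros i Hi.
      apply in_rev in Hi. apply in_removelast' in Hi.
      specialize (HN i (wi i) (r (S i)) (proj1 (Hwi i)) Hi (proj2 (Hwi i))). lia.
    + destruct (erase (op (cayley_r mul B)) om (fun x => exists i, r i = x) Hom1 Hom2 Hom3) as [s [Hs [N1 N2]]].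
      exists (exist _ s (or_intror Hs)). unfold vset; simpl. split; apply NS_op; assumption.
Qed.

Definition rep {O} {G : digraph O} (E : End_ G) : RA G :=
  proj1_sig (constructive_indefinite_description _ (proj2_sig E)).

Lemma rep_spec {O} {G : digraph O} (E : End_ G) s : proj1_sig E s <-> ra_equiv (rep E) s.
Proof. exact (proj2_sig (constructive_indefinite_description _ (proj2_sig E)) s). Qed.

Definition mapEnd {O} {G1 G2 : digraph O} (c : RA G1 -> RA G2) (E : End_ G1) : End_ G2 :=
  exist (fun E' => is_end E') (fun s => ra_equiv (c (rep E)) s)
    (ex_intro (fun r => forall s, ra_equiv (c (rep E)) s <-> ra_equiv r s) (c (rep E)) (fun s => iff_refl _)).

Lemma End_eq {O} {G : digraph O} (E E' : End_ G) :
  (forall s, proj1_sig E s <-> proj1_sig E' s) -> E = E'.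
Proof.
  destruct E as [E HE], E' as [E' HE']. simpl. intros H.
  assert (E = E') as <-.
  { apply functional_extensionality. intros s. apply propositional_extensionality. apply H. }
  f_equal. apply proof_irrelevance.
Qed.

Lemma roundtrip {O} (G1 G2 : digraph O) (Pr : (O -> Prop) -> (O -> Prop) -> Prop)
  (h1 : forall r s : RA G1, ra_le r s <-> Pr (vset r) (vset s))
  (h2 : forall r s : RA G2, ra_le r s <-> Pr (vset r) (vset s))
  (t1 : forall X Z (m : RA G1), Pr X (vset m) -> Pr (vset m) Z -> Pr X Z)
  (t2 : forall X Z (m : RA G2), Pr X (vset m) -> Pr (vset m) Z -> Pr X Z)
  (c12 : RA G1 -> RA G2) (hc12 : forall r, Pr (vset r) (vset (c12 r)) /\ Pr (vset (c12 r)) (vset r))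
  (c21 : RA G2 -> RA G1) (hc21 : forall r, Pr (vset r) (vset (c21 r)) /\ Pr (vset (c21 r)) (vset r)) :
  forall E, mapEnd c21 (mapEnd c12 E) = E.
Proof.
  intros E. apply End_eq. intros s. simpl. rewrite (rep_spec E s).
  set (r0 := rep E). set (c := c12 r0). set (c2 := rep (mapEnd c12 E)). set (d := c21 c2).
  assert (Hcc2 : ra_equiv c2 c).
  { apply (rep_spec (mapEnd c12 E) c). simpl. fold r0 c. unfold ra_equiv. rewrite !h2.
    destruct (hc12 r0) as [A1 A2]. fold c in A1, A2. split; apply (t1 _ _ r0); assumption. }
  unfold ra_equiv in *. rewrite h2, h2 in Hcc2. destruct Hcc2 as [B1 B2].
  destruct (hc12 r0) as [A1 A2]. fold c in A1, A2.
  destruct (hc21 c2) as [D1 D2]. fold d in D1, D2.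
  assert (Hr0d : Pr (vset r0) (vset d)) by (apply (t2 _ _ c2); [apply (t2 _ _ c)|]; assumption).
  assert (Hdr0 : Pr (vset d) (vset r0)) by (apply (t2 _ _ c); [apply (t2 _ _ c2)|]; assumption).
  rewrite !h1. split; intros [H1 H2]; split.
  - apply (t1 _ _ d); assumption.
  - apply (t1 _ _ d); assumption.
  - apply (t1 _ _ r0); assumption.
  - apply (t1 _ _ r0); assumption.
Qed.

Lemma order {O} (G1 G2 : digraph O) (Pr : (O -> Prop) -> (O -> Prop) -> Prop)
  (h1 : forall r s : RA G1, ra_le r s <-> Pr (vset r) (vset s))
  (h2 : forall r s : RA G2, ra_le r s <-> Pr (vset r) (vset s))
  (t1 : forall X Z (m : RA G1), Pr X (vset m) -> Pr (vset m) Z -> Pr X Z)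
  (t2 : forall X Z (m : RA G2), Pr X (vset m) -> Pr (vset m) Z -> Pr X Z)
  (c12 : RA G1 -> RA G2) (hc12 : forall r, Pr (vset r) (vset (c12 r)) /\ Pr (vset (c12 r)) (vset r)) :
  forall E F, end_le E F <-> end_le (mapEnd c12 E) (mapEnd c12 F).
Proof.
  intros E F. split.
  - intros [r [t [HE [HF Hrt]]]]. apply rep_spec in HE, HF. unfold ra_equiv in HE, HF.
    rewrite !h1 in HE, HF. rewrite h1 in Hrt.
    destruct HE as [HE1 HE2], HF as [HF1 HF2].
    destruct (hc12 (rep E)) as [A1 A2]. destruct (hc12 (rep F)) as [B1 B2].
    exists (c12 (rep E)), (c12 (rep F)). simpl. unfold ra_equiv. rewrite !h2.
    split; [split; apply (t1 _ _ (rep E)); assumption|].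
    split; [split; apply (t1 _ _ (rep F)); assumption|].
    apply (t1 _ _ (rep F)); [|exact B1]. apply (t1 _ _ t); [|exact HF2].
    apply (t1 _ _ r); [|exact Hrt]. apply (t1 _ _ (rep E)); assumption.
  - intros [s [s' [Hs [Hs' H]]]]. simpl in Hs, Hs'. unfold ra_equiv in Hs, Hs'. rewrite !h2 in Hs, Hs'.
    rewrite h2 in H. destruct Hs as [S1 S2], Hs' as [S1' S2'].
    destruct (hc12 (rep E)) as [A1 A2]. destruct (hc12 (rep F)) as [B1 B2].
    exists (rep E), (rep F). rewrite !rep_spec. unfold ra_equiv. rewrite !h1.
    split; [split; apply (t2 _ _ (c12 (rep E))); assumption|].
    split; [split; apply (t2 _ _ (c12 (rep F))); assumption|].
    apply (t2 _ _ (c12 (rep F))); [|exact B2]. apply (t2 _ _ s'); [|exact S2'].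
    apply (t2 _ _ s); [|exact H]. apply (t2 _ _ (c12 (rep E))); assumption.
Qed.

Lemma fun_of_ex {X Y : Type} (P : X -> Y -> Prop) : (forall x, exists y, P x y) ->
  exists f : X -> Y, forall x, P x (f x).
Proof.
  intros H. exists (fun x => proj1_sig (constructive_indefinite_description _ (H x))).
  intros x. exact (proj2_sig (constructive_indefinite_description _ (H x))).
Qed.

Theorem mainTheorem6 (S : Type) (mul : S -> S -> S) (Hassoc : associative mul)
  (A B : list S) (HA : generates mul A) (HB : generates mul B) :
  ends_iso (cayley_r mul A) (cayley_r mul B).
Proof.
  destruct (words_exist mul B Hassoc HB A) as [WAB HWAB].
  destruct (words_exist mul A Hassoc HA B) as [WBA HWBA].
  set (Pr := NS (cayley_r mul A)).
  assert (h1 : forall r s : RA (cayley_r mul A), ra_le r s <-> Pr (vset r) (vset s)).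
  { intros r s. split; [apply reach_NS|apply NS_reach]. }
  assert (h2 : forall r s : RA (cayley_r mul B), ra_le r s <-> Pr (vset r) (vset s)).
  { intros r s. split; intros H.
    - apply (transfer mul B A WBA); [exact HWBA|]. apply reach_NS, H.
    - apply NS_reach. apply (transfer mul A B WAB); [exact HWAB|exact H]. }
  assert (t1 : forall X Z (m : RA (cayley_r mul A)), Pr X (vset m) -> Pr (vset m) Z -> Pr X Z).
  { intros X Z m. apply trans_RA. }
  assert (t2 : forall X Z (m : RA (cayley_r mul B)), Pr X (vset m) -> Pr (vset m) Z -> Pr X Z).
  { intros X Z m H1 H2. apply (transfer mul B A WBA); [exact HWBA|].
    apply (trans_RA _ m); apply (transfer mul A B WAB); assumption. }
  destruct (fun_of_ex _ (corr mul A B WAB HWAB)) as [c12 hc12].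
  destruct (fun_of_ex _ (corr mul B A WBA HWBA)) as [c21 hc21].
  assert (hc12' : forall r, Pr (vset r) (vset (c12 r)) /\ Pr (vset (c12 r)) (vset r)).
  { intros r. destruct (hc12 r) as [H1 H2]. split; apply (transfer mul B A WBA); assumption. }
  exists (mapEnd c12), (mapEnd c21). split; [|split].
  - apply (roundtrip _ _ Pr h1 h2 t1 t2 c12 hc12' c21 hc21).
  - apply (roundtrip _ _ Pr h2 h1 t2 t1 c21 hc21 c12 hc12').
  - apply (order _ _ Pr h1 h2 t1 t2 c12 hc12').
Qed.
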